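(* Let $(W_1,w_2,\lambda)$ be a KKT point (in terms of the B-subdifferential) of the non-convex max-margin problem $\min\frac12(\|W_1\|_F^2+\|w_2\|_2^2)$ s.t. $Y(XW_1)_+w_2\ge\mathbf1$. Then $(W_1,w_2,\lambda)$ yields a KKT point of the convex problem (i.e., there exist $u_j,u'_j\in\mathbb R^d$, $j\in[p]$, with $\sum_jD_jX(u'_j-u_j)=(XW_1)_+w_2$, and $z_j,z'_j\in\mathbb R^N$, which together with $\lambda$ satisfy the convex KKT conditions in the context) if and only if $\lambda$ is dual feasible: $$\max_{u:\|u\|_2\le1}|\lambda^T(Xu)_+|\le1.$$ Moreover, this dual feasibility condition is equivalent to: for every $D_j\in\mathcal P$, $$\max_{\|u\|_2\le1,\ (2D_j-I)Xu\ge0}|\lambda^TD_jXu|\le1.$$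
   Context: Binary setting: $X\in\mathbb R^{N\times d}$ rows $x_n$, $y\in\{\pm1\}^N$, $Y=\mathrm{diag}(y)$, network output $(XW_1)_+w_2$, $\mathcal P=\{\mathrm{diag}(\mathbb I(Xw\ge0)):w\in\mathbb R^d\}=\{D_1,\dots,D_p\}$. KKT point of the non-convex problem (B-subdifferential): $Y\lambda\ge0$, $Y(XW_1)_+w_2\ge\mathbf 1$, $\lambda_n(y_n(x_n^TW_1)_+w_2-1)=0$, $w_2=(XW_1)_+^T\lambda$, and for each $i$, $w_{1,i}=w_{2,i}\sum_n\lambda_ng_{n,i}x_n$ with $g_{n,i}=1$ if $x_n^Tw_{1,i}>0$, $0$ if $<0$, $\in\{0,1\}$ if $=0$. Convex problem: $\min\sum_{j=1}^p(\|u_j\|_2+\|u'_j\|_2)$ s.t. $Y\sum_jD_jX(u'_j-u_j)\ge\mathbf1$, $(2D_j-I)Xu_j\ge0$, $(2D_j-I)Xu'_j\ge0$. Its KKT conditions, with multipliers $\lambda$ ($Y\lambda\ge0$) and $z_j,z'_j\ge0$: primal feasibility; $X^TD_j\lambda+X^T(2D_j-I)z'_j\in\partial\|u'_j\|_2$ and $-X^TD_j\lambda+X^T(2D_j-I)z_j\in\partial\|u_j\|_2$ for all $j$; $\lambda_n\big(y_n(\sum_jD_jX(u'_j-u_j))_n-1\big)=0$; $z_{j,n}((2D_j-I)Xu_j)_n=0$ and $z'_{j,n}((2D_j-I)Xu'_j)_n=0$ for all $j,n$. *)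

(* Defs.v *)
From HB Require Import structures.
From mathcomp Require Import all_boot all_order all_algebra.
From mathcomp Require Import reals.
Set Implicit Arguments. Unset Strict Implicit. Unset Printing Implicit Defensive.
Import Order.TTheory GRing.Theory Num.Theory.
Local Open Scope ring_scope.

Section Defs.
Context {R : realType}.

Definition norm2 (n : nat) (v : 'cV[R]_n) : R := Num.sqrt (\sum_i v i 0 ^+ 2).

Definition subdiff (n : nat) (f : 'cV[R]_n -> R) (u g : 'cV[R]_n) : Prop :=
  forall v : 'cV[R]_n, f u + (g^T *m (v - u)) 0 0 <= f v.

Definition relu (a b : nat) (A : 'M[R]_(a, b)) : 'M[R]_(a, b) :=
  map_mx (fun x => Num.max x 0) A.

Definition mge0 (a b : nat) (A : 'M[R]_(a, b)) : Prop := forall i j, 0 <= A i j.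
Definition cge1 (a : nat) (v : 'cV[R]_a) : Prop := forall i, 1 <= v i 0.

Definition Dmx (N : nat) (D : {set 'I_N}) : 'M[R]_N :=
  diag_mx (\row_n (if n \in D then 1 else 0)).

Definition Ymx (N : nat) (y : 'cV[R]_N) : 'M[R]_N := diag_mx y^T.

(* activation pattern diag(1(Xw >= 0)), as an index set *)
Definition pattern (N d : nat) (X : 'M[R]_(N, d)) (w : 'cV[R]_d) : {set 'I_N} :=
  [set n | 0 <= (X *m w) n 0].

(* KKT point (B-subdifferential) of the non-convex max-margin problem
   min 1/2(|W1|_F^2 + |w2|^2) s.t. Y (X W1)_+ w2 >= 1 *)
Definition nonconvex_KKT (N d m : nat) (X : 'M[R]_(N, d)) (y : 'cV[R]_N)
    (W1 : 'M[R]_(d, m)) (w2 : 'cV[R]_m) (lam : 'cV[R]_N) : Prop :=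
  [/\ mge0 (Ymx y *m lam),
      cge1 (Ymx y *m (relu (X *m W1) *m w2)),
      (forall n, lam n 0 * ((Ymx y *m (relu (X *m W1) *m w2)) n 0 - 1) = 0),
      w2 = (relu (X *m W1))^T *m lam &
      exists g : 'I_N -> 'I_m -> R,
        (forall n i, [/\ g n i = 0 \/ g n i = 1,
                         0 < (X *m W1) n i -> g n i = 1 &
                         (X *m W1) n i < 0 -> g n i = 0]) /\
        (forall i, col i W1 = w2 i 0 *: \sum_n (lam n 0 * g n i) *: (row n X)^T)].

(* KKT conditions of the convex problem
   min sum_j (|u_j| + |u'_j|) s.t. Y sum_j D_j X (u'_j - u_j) >= 1,
   (2D_j - I) X u_j >= 0, (2D_j - I) X u'_j >= 0,
   with P = {D_1, ..., D_p} given by Ds. *)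
Definition convex_KKT (N d p : nat) (X : 'M[R]_(N, d)) (y : 'cV[R]_N)
    (Ds : 'I_p -> {set 'I_N}) (lam : 'cV[R]_N)
    (u u' : 'I_p -> 'cV[R]_d) (z z' : 'I_p -> 'cV[R]_N) : Prop :=
  let out := \sum_(j < p) Dmx (Ds j) *m X *m (u' j - u j) in
  let S j := 2%:R *: Dmx (Ds j) - 1%:M in
  [/\
      cge1 (Ymx y *m out),
      (forall j, mge0 (S j *m X *m u j)),
      (forall j, mge0 (S j *m X *m u' j)),
      mge0 (Ymx y *m lam) &
      (forall j, mge0 (z j) /\ mge0 (z' j))] /\
  [/\
      (forall j, subdiff (@norm2 d) (u' j)
                   (X^T *m Dmx (Ds j) *m lam + X^T *m S j *m z' j)),
      (forall j, subdiff (@norm2 d) (u j)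
                   (- (X^T *m Dmx (Ds j) *m lam) + X^T *m S j *m z j)),
      (forall n, lam n 0 * ((Ymx y *m out) n 0 - 1) = 0) &
      (forall j n, z j n 0 * (S j *m X *m u j) n 0 = 0
                   /\ z' j n 0 * (S j *m X *m u' j) n 0 = 0)].

Definition dual_feasible (N d : nat) (X : 'M[R]_(N, d)) (lam : 'cV[R]_N) : Prop :=
  forall u : 'cV[R]_d, norm2 u <= 1 -> `|(lam^T *m relu (X *m u)) 0 0| <= 1.

Definition dual_feasible_patterns (N d p : nat) (X : 'M[R]_(N, d))
    (Ds : 'I_p -> {set 'I_N}) (lam : 'cV[R]_N) : Prop :=
  forall j (u : 'cV[R]_d), norm2 u <= 1 ->
    mge0 ((2%:R *: Dmx (Ds j) - 1%:M) *m X *m u) ->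
    `|(lam^T *m Dmx (Ds j) *m X *m u) 0 0| <= 1.

End Defs.

(* Main.v *)
Require Import Defs.
From HB Require Import structures.
From mathcomp Require Import all_boot all_order all_algebra.
From mathcomp Require Import reals.
From mathcomp Require Import ring lra.
Import Order.TTheory GRing.Theory Num.Theory.
Local Open Scope ring_scope.
Set Implicit Arguments. Unset Strict Implicit. Unset Printing Implicit Defensive.

Section Dot.
Variable R : realType.

Definition dot (n : nat) (u v : 'cV[R]_n) : R := \sum_i u i 0 * v i 0.
Definition nrm (n : nat) (v : 'cV[R]_n) : R := Num.sqrt (dot v v).

Lemma norm2E n (v : 'cV[R]_n) : norm2 v = nrm v.
Proof. by rewrite /norm2 /nrm /dot; congr Num.sqrt; apply eq_bigr => i _; rewrite expr2. Qed.

Lemma dotC n (u v : 'cV[R]_n) : dot u v = dot v u.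
Proof. by apply eq_bigr => i _; rewrite mulrC. Qed.

Lemma dotDl n (u v w : 'cV[R]_n) : dot (u + v) w = dot u w + dot v w.
Proof. by rewrite /dot -big_split; apply eq_bigr => i _; rewrite !mxE mulrDl. Qed.

Lemma dotZl n k (u v : 'cV[R]_n) : dot (k *: u) v = k * dot u v.
Proof. by rewrite /dot mulr_sumr; apply eq_bigr => i _; rewrite !mxE mulrA. Qed.

Lemma dotNl n (u v : 'cV[R]_n) : dot (- u) v = - dot u v.
Proof. by rewrite -scaleN1r dotZl mulN1r. Qed.

Lemma dotBl n (u v w : 'cV[R]_n) : dot (u - v) w = dot u w - dot v w.
Proof. by rewrite dotDl dotNl. Qed.

Lemma dot0l n (v : 'cV[R]_n) : dot 0 v = 0.
Proof. by rewrite /dot big1 // => i _; rewrite mxE mul0r. Qed.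

Lemma dotDr n (u v w : 'cV[R]_n) : dot w (u + v) = dot w u + dot w v.
Proof. by rewrite dotC dotDl !(dotC w). Qed.
Lemma dotZr n k (u v : 'cV[R]_n) : dot v (k *: u) = k * dot v u.
Proof. by rewrite dotC dotZl dotC. Qed.
Lemma dotNr n (u v : 'cV[R]_n) : dot v (- u) = - dot v u.
Proof. by rewrite dotC dotNl dotC. Qed.
Lemma dotBr n (u v w : 'cV[R]_n) : dot w (u - v) = dot w u - dot w v.
Proof. by rewrite dotDr dotNr. Qed.
Lemma dot0r n (v : 'cV[R]_n) : dot v 0 = 0.
Proof. by rewrite dotC dot0l. Qed.

Lemma dot_ge0 n (v : 'cV[R]_n) : 0 <= dot v v.
Proof. by apply sumr_ge0 => i _; rewrite -expr2 sqr_ge0. Qed.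

Lemma dot_eq0 n (v : 'cV[R]_n) : dot v v = 0 -> v = 0.
Proof.
move=> H; apply/matrixP => i j; rewrite (ord1 j) mxE.
have h0 : forall i, true -> 0 <= v i 0 * v i 0 by move=> k _; rewrite -expr2 sqr_ge0.
have := psumr_eq0P h0 H (i := i) (erefl true).
by move/eqP; rewrite mulf_eq0 orbb => /eqP.
Qed.

Lemma dot_mx n (u v : 'cV[R]_n) : (u^T *m v) 0 0 = dot u v.
Proof. by rewrite mxE; apply eq_bigr => i _; rewrite mxE. Qed.

Lemma mulmx_dot a n (A : 'M[R]_(a, n)) (v : 'cV[R]_n) k : (A *m v) k 0 = dot (row k A)^T v.
Proof. by rewrite mxE; apply eq_bigr => i _; rewrite !mxE. Qed.

Lemma dot_adj a n (A : 'M[R]_(a, n)) (z : 'cV[R]_a) (v : 'cV[R]_n) :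
  dot (A^T *m z) v = dot z (A *m v).
Proof.
rewrite /dot.
under eq_bigr do rewrite mxE mulr_suml.
rewrite exchange_big /=; apply eq_bigr => k _.
rewrite mxE mulr_sumr; apply eq_bigr => i _; rewrite !mxE; ring.
Qed.

Lemma dot_sum n (I : Type) (r : seq I) (P : pred I) (F : I -> 'cV[R]_n) v :
  dot (\sum_(i <- r | P i) F i) v = \sum_(i <- r | P i) dot (F i) v.
Proof.
apply: (big_morph (fun u => dot u v)); first by move=> a b; rewrite dotDl.
by rewrite dot0l.
Qed.

Lemma nrm_ge0 n (v : 'cV[R]_n) : 0 <= nrm v.
Proof. exact: sqrtr_ge0. Qed.

Lemma nrm_sq n (v : 'cV[R]_n) : nrm v ^+ 2 = dot v v.
Proof. by rewrite sqr_sqrtr // dot_ge0. Qed.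

Lemma nrm0 n : nrm (0 : 'cV[R]_n) = 0.
Proof. by rewrite /nrm dot0l sqrtr0. Qed.

Lemma nrm_eq0 n (v : 'cV[R]_n) : nrm v = 0 -> v = 0.
Proof. by move=> H; apply: dot_eq0; rewrite -nrm_sq H expr0n. Qed.

Lemma dot_lin2 n x y (u v : 'cV[R]_n) :
  dot (x *: u + y *: v) (x *: u + y *: v) =
  x ^+ 2 * dot u u + 2 * x * y * dot u v + y ^+ 2 * dot v v.
Proof. rewrite !(dotDl, dotDr, dotZl, dotZr) (dotC v u); ring. Qed.

Lemma CS2 n (u v : 'cV[R]_n) : dot u v ^+ 2 <= dot u u * dot v v.
Proof.
have [v0|vn0] := eqVneq v 0.
  by rewrite v0 !dot0r expr0n mulr0.
have hb : 0 < dot v v.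
  rewrite lt_def dot_ge0 andbT; apply/eqP => h; move: vn0; rewrite (dot_eq0 h) eqxx //.
have := dot_ge0 (dot v v *: u + (- dot u v) *: v); rewrite dot_lin2 => h.
have : 0 <= dot v v * (dot u u * dot v v - dot u v ^+ 2) by nra.
by rewrite pmulr_rge0 // subr_ge0.
Qed.

Lemma CS n (u v : 'cV[R]_n) : dot u v <= nrm u * nrm v.
Proof.
rewrite /nrm -sqrtrM ?dot_ge0 //.
apply: le_trans (ler_norm _) _.
by rewrite -sqrtr_sqr ler_sqrt ?CS2 // mulr_ge0 ?dot_ge0.
Qed.

Lemma nrmZ n k (v : 'cV[R]_n) : nrm (k *: v) = `|k| * nrm v.
Proof. by rewrite /nrm dotZl dotZr mulrA -expr2 sqrtrM ?sqr_ge0 // sqrtr_sqr. Qed.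

Lemma nrmD n (u v : 'cV[R]_n) : nrm (u + v) <= nrm u + nrm v.
Proof.
rewrite {1}/nrm -(ger0_norm (addr_ge0 (nrm_ge0 u) (nrm_ge0 v))) -sqrtr_sqr ler_sqrt ?sqr_ge0 //.
rewrite dotDl !dotDr (dotC v u) sqrrD !nrm_sq.
have := CS u v; lra.
Qed.

Lemma nrm_sum n (I : Type) (r : seq I) (P : pred I) (F : I -> 'cV[R]_n) :
  nrm (\sum_(i <- r | P i) F i) <= \sum_(i <- r | P i) nrm (F i).
Proof.
apply: (big_ind2 (fun x y => nrm x <= y)); first by rewrite nrm0.
  by move=> x1 x2 y1 y2 h1 h2; apply: le_trans (nrmD _ _) _; apply: lerD.
by [].
Qed.

Lemma subdiff_le n (u g : 'cV[R]_n) : subdiff (@norm2 R n) u g -> forall v, dot g v <= nrm v.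
Proof.
move=> H v; have := H (u + v); rewrite !norm2E dot_mx (addrC u v) addrK.
have := nrmD v u; rewrite (addrC v u); lra.
Qed.

Lemma subdiffI n (u g : 'cV[R]_n) : nrm g <= 1 -> dot g u = nrm u -> subdiff (@norm2 R n) u g.
Proof.
move=> h1 h2 v; rewrite !norm2E dot_mx dotBr h2 addrC subrK.
apply: le_trans (CS _ _) _; rewrite -{2}(mul1r (nrm v)); apply: ler_wpM2r => //; exact: nrm_ge0.
Qed.

Lemma nrm_le1 n (p : 'cV[R]_n) : dot p p <= nrm p -> nrm p <= 1.
Proof. rewrite -nrm_sq => h; have := nrm_ge0 p; nra. Qed.

End Dot.

Section Cone.
Variable R : realType.
Variable d : nat.
Implicit Types (s : seq 'cV[R]_d) (a b c v w x : 'cV[R]_d).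

Definition Kin s v := forall a, a \in s -> 0 <= dot a v.
Fixpoint incone s b : Prop :=
  match s with [::] => b = 0 | a :: s' => exists2 t : R, 0 <= t & incone s' (b - t *: a) end.

Lemma Kin_cons a s v : Kin (a :: s) v <-> 0 <= dot a v /\ Kin s v.
Proof.
split.
  by move=> H; split; [apply: H; rewrite mem_head | move=> x hx; apply: H; rewrite in_cons hx orbT].
by case=> h1 h2 x; rewrite in_cons => /orP[/eqP->|/h2].
Qed.

Lemma cone_dot s x v : incone s x -> Kin s v -> 0 <= dot x v.
Proof.
elim: s x => [|a s IH] x /=; first by move=> ->; rewrite dot0l.
case=> t ht hc /Kin_cons [ha hs].
have := IH _ hc hs; rewrite dotBl dotZl.
have := mulr_ge0 ht ha; lra.
Qed.

Lemma cone_map (f : 'cV[R]_d -> 'cV[R]_d) s y :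
  f 0 = 0 -> (forall x t a, f (x + t *: a) = f x + t *: f a) ->
  incone (map f s) y -> exists2 x, incone s x & y = f x.
Proof.
move=> f0 fl; elim: s y => [|a s IH] y /=; first by move=> ->; exists 0.
case=> t ht /IH [x0 hx0 e]; exists (x0 + t *: a).
  by exists t => //; rewrite addrK.
by rewrite fl -e subrK.
Qed.

Lemma farkas_gen n : forall s, size s = n -> forall b,
  incone s b \/ exists v, Kin s v /\ dot b v < 0.
Proof.
elim: n => [|n IH] [|a s] //= Hs b.
  have [->|bn0] := eqVneq b 0; first by left.
  right; exists (- b); split; first by move=> x.
  rewrite dotNr oppr_lt0 lt_def dot_ge0 andbT; apply/eqP => h.
  by move: bn0; rewrite (dot_eq0 h) eqxx.
case: Hs => Hs.
case: (IH s Hs b) => [Hb | [v [Kv Hbv]]].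
  by left; exists 0 => //; rewrite scale0r subr0.
case: (lerP 0 (dot a v)) => Hav.
  by right; exists v; split => //; apply/Kin_cons.
set al := dot a v in Hav.
have aln0 : al != 0 by rewrite lt_eqF.
pose f := fun x : 'cV[R]_d => x - (dot x v / al) *: a.
have f0 : f 0 = 0 by rewrite /f dot0l mul0r scale0r subr0.
have fl : forall x t a0, f (x + t *: a0) = f x + t *: f a0.
  by move=> x t a0; rewrite /f dotDl dotZl; apply/matrixP => i j; rewrite !mxE; field.
case: (IH (map f s) (etrans (size_map _ _) Hs) (f b)) => [Hc | [w [Kw Hbw]]].
  left; have [x hx e] := cone_map f0 fl Hc.
  have hxv := cone_dot hx Kv.
  exists ((dot b v - dot x v) / al).
    have : 0 <= (dot x v - dot b v) / (- al) by apply: divr_ge0; lra.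
    by rewrite invrN mulrN -mulNr opprB.
  have -> : b - ((dot b v - dot x v) / al) *: a = f b + (dot x v / al) *: a.
    by rewrite /f; apply/matrixP => i j; rewrite !mxE; field.
  by rewrite e /f subrK.
right; exists (w - (dot a w / al) *: v); split.
  apply/Kin_cons; split.
    rewrite dotBr dotZr -/al mulfVK //; lra.
  move=> x hx; have := Kw (f x) (map_f f hx).
  rewrite /f dotBr dotBl !dotZr !dotZl (dotC a w).
  have e : dot w a / al * dot x v = dot x v / al * dot w a by ring.
  by rewrite e.
move: Hbw; rewrite /f dotBr dotBl !dotZr !dotZl (dotC a w).
have e : dot w a / al * dot b v = dot b v / al * dot w a by ring.
by rewrite e.
Qed.

Lemma farkas s b : (forall v, Kin s v -> 0 <= dot b v) -> incone s b.
Proof.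
move=> H; case: (farkas_gen (erefl (size s)) b) => // [[v [kv hv]]].
by have := H v kv; lra.
Qed.

End Cone.

Section Proj.
Variable R : realType.
Variable d : nat.
Implicit Types (s : seq 'cV[R]_d) (a b c v w x y : 'cV[R]_d).

Definition F c x := dot (c - x) (c - x).

Lemma Kin_add s x y : Kin s x -> Kin s y -> Kin s (x + y).
Proof. by move=> hx hy a ha; rewrite dotDr addr_ge0 ?hx ?hy. Qed.
Lemma Kin_scale s k x : 0 <= k -> Kin s x -> Kin s (k *: x).
Proof. by move=> hk hx a ha; rewrite dotZr mulr_ge0 ?hx. Qed.

Lemma orth_split a u k : dot u a = 0 ->
  dot (u + k *: a) (u + k *: a) = dot u u + k ^+ 2 * dot a a.
Proof. by move=> h; rewrite !(dotDl, dotDr, dotZl, dotZr) (dotC a u) h; ring. Qed.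

Lemma proj_gen n : forall s, size s = n -> forall c,
  exists2 p, Kin s p & forall x, Kin s x -> F c p <= F c x.
Proof.
elim: n => [|n IH] [|a s] //= Hs c.
  exists c => [x|x _]; first by [].
  by rewrite /F subrr dot0l dot_ge0.
case: Hs => Hs.
have [p' Kp' Mp'] := IH s Hs c.
case: (lerP 0 (dot a p')) => hap.
  exists p'; first by apply/Kin_cons.
  by move=> x /Kin_cons [_ kx]; exact: Mp' x kx.
set aa := dot a a.
have aan0 : aa != 0.
  apply/eqP => h; move: hap; rewrite (dot_eq0 h) dot0l ltxx //.
have aa0 : 0 < aa by rewrite lt_def aan0 dot_ge0.
pose P := fun x : 'cV[R]_d => x - (dot x a / aa) *: a.
have PaP : forall x, dot (P x) a = 0.
  by move=> x; rewrite /P dotBl dotZl -/aa mulfVK // subrr.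
have Psym : forall x y, dot x (P y) = dot (P x) y.
  move=> x y; rewrite /P dotBr dotBl dotZr dotZl (dotC a y); ring.
have Pid : forall y, dot y a = 0 -> P y = y.
  by move=> y h; rewrite /P h mul0r scale0r subr0.
have [p'' Kp'' Mp''] := IH (map P s) (etrans (size_map _ _) Hs) (P c).
have claimA : forall y, Kin s y -> dot y a = 0 -> F c (P p'') <= F c y.
  move=> y ky hya.
  have kPy : Kin (map P s) y.
    move=> z /mapP [x0 hx0 ->]; rewrite -Psym Pid //; exact: ky.
  have h1 := Mp'' y kPy.
  have e1 : forall u, dot u a = 0 -> c - u = (P c - u) + (dot c a / aa) *: a.
    by move=> u _; rewrite /P; apply/matrixP => i j; rewrite !mxE; ring.
  rewrite /F (e1 (P p'')) ?PaP // (e1 y) //.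
  rewrite orth_split; last by rewrite dotBl !PaP subrr.
  rewrite orth_split; last by rewrite dotBl PaP hya subrr.
  have e2 : P c - p'' = (P c - P p'') + (- (dot p'' a / aa)) *: a.
    by rewrite /P; apply/matrixP => i j; rewrite !mxE; ring.
  move: h1; rewrite /F e2 orth_split; last by rewrite dotBl !PaP subrr.
  have := mulr_ge0 (sqr_ge0 (- (dot p'' a / aa))) (dot_ge0 a); rewrite -/aa.
  lra.
exists (P p'').
  apply/Kin_cons; split; first by rewrite dotC PaP.
  by move=> x hx; rewrite Psym; apply: Kp''; exact: map_f.
move=> x /Kin_cons [hax kx].
have [hx0|hx0] := eqVneq (dot a x) 0.
  by apply: claimA => //; rewrite dotC.
have hax' : 0 < dot a x by rewrite lt_def hx0 hax.
set th := dot a x / (dot a x - dot a p').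
have hden : 0 < dot a x - dot a p' by lra.
have th0 : 0 <= th by apply: divr_ge0; lra.
have th1 : th <= 1 by rewrite /th ler_pdivrMr // mul1r; lra.
pose y := (1 - th) *: x + th *: p'.
have ky : Kin s y.
  by apply: Kin_add; apply: Kin_scale => //; lra.
have hya : dot y a = 0.
  rewrite /y dotDl !dotZl (dotC x a) (dotC p' a) /th.
  by field; rewrite lt0r_neq0.
apply: le_trans (claimA y ky hya) _.
have e : c - y = (1 - th) *: (c - x) + th *: (c - p').
  by rewrite /y; apply/matrixP => i j; rewrite !mxE; ring.
rewrite /F e dot_lin2.
have h2 := Mp' x kx; rewrite /F in h2.
have h3 := dot_ge0 ((c - x) - (c - p')).
rewrite dotBl (dotBr _ _ (c - x)) (dotBr _ _ (c - p')) (dotC (c - p') (c - x)) in h3.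
set A := dot (c - x) (c - x) in h2 h3 *.
set C := dot (c - p') (c - p') in h2 h3 *.
set B := dot (c - x) (c - p') in h3 *.
have E : A - ((1 - th) ^+ 2 * A + 2 * (1 - th) * th * B + th ^+ 2 * C)
         = (1 - th) * th * (A + C - 2 * B) + th * (A - C) by ring.
have : 0 <= (1 - th) * th * (A + C - 2 * B).
  by apply: mulr_ge0; [apply: mulr_ge0; lra | lra].
have : 0 <= th * (A - C) by apply: mulr_ge0; lra.
lra.
Qed.

Lemma var_ineq c p e : (forall t, 0 <= t -> t <= 1 -> F c p <= F c (p + t *: e)) ->
  dot (c - p) e <= 0.
Proof.
move=> H; rewrite leNgt; apply/negP => hq.
set q := c - p in hq.
set qe := dot q e in hq.
set ee := dot e e.
have ee0 : 0 <= ee := dot_ge0 e.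
set t := qe / (qe + ee).
have hs : 0 < qe + ee by lra.
have t0 : 0 < t by apply: divr_gt0.
have t1 : t <= 1 by rewrite /t ler_pdivrMr // mul1r; lra.
have ht : t * qe + t * ee = qe by rewrite /t; field; rewrite lt0r_neq0.
have := H t (ltW t0) t1.
have e1 : c - (p + t *: e) = q + (- t) *: e by rewrite /q; apply/matrixP => i j; rewrite !mxE; ring.
rewrite /F e1 -/q -[q]scale1r dot_lin2 scale1r -/qe -/ee.
have := congr1 (fun z => t * z) ht => /= ht2.
nra.
Qed.

Lemma conic s c : (forall v, Kin s v -> dot c v <= nrm v) ->
  exists2 w, incone s w & nrm (c + w) <= 1.
Proof.
move=> H.
have [p Kp Mp] := proj_gen (erefl (size s)) c.
have hx : forall x, Kin s x -> dot (c - p) x <= 0.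
  move=> x kx; apply: var_ineq => t t0 t1; apply: Mp.
  by apply: Kin_add => //; apply: Kin_scale.
have hp : dot (c - p) (- p) <= 0.
  apply: var_ineq => t t0 t1; apply: Mp.
  have -> : p + t *: - p = (1 - t) *: p by apply/matrixP => i j; rewrite !mxE; ring.
  by apply: Kin_scale => //; lra.
exists (- (c - p)).
  by apply: farkas => v kv; rewrite dotNl oppr_ge0; exact: hx.
rewrite opprB addrC subrK; apply: nrm_le1.
have := H p Kp; move: hp; rewrite dotNr dotBl; lra.
Qed.

End Proj.

Section Mat.
Variable R : realType.
Variables N d : nat.
Implicit Types (A : 'M[R]_(N, d)) (c v w : 'cV[R]_d).

Definition rows (A : 'M[R]_(N, d)) := [seq (row n A)^T | n <- enum 'I_N].

Lemma Kin_rows A v : Kin (rows A) v <-> mge0 (A *m v).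
Proof.
split.
  move=> H i j; rewrite (ord1 j) mulmx_dot; apply: H; apply/mapP; exists i => //.
  by rewrite mem_enum.
by move=> H a /mapP [n _ ->]; rewrite -mulmx_dot; apply: H.
Qed.

Lemma cone_enum (T : finType) (f : T -> 'cV[R]_d) r w : uniq r ->
  incone (map f r) w -> exists z : T -> R, (forall x, 0 <= z x) /\ w = \sum_(x <- r) z x *: f x.
Proof.
elim: r w => [|a r IH] w /=.
  by move=> _ ->; exists (fun _ => 0); split => //; rewrite big_nil.
case/andP => anr ur [t ht /(IH _ ur) [z [hz e]]].
exists (fun x => if x == a then t else z x); split.
  by move=> x; case: ifP.
rewrite big_cons eqxx.
rewrite (eq_big_seq (fun x => z x *: f x)); last first.
  by move=> x hx; case: eqP => // ex; move: anr; rewrite -ex hx.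
by rewrite -e addrC subrK.
Qed.

Lemma cone_rows A w : incone (rows A) w -> exists2 z, mge0 z & w = A^T *m z.
Proof.
move=> /(cone_enum (enum_uniq _)) [z [hz ->]].
exists (\col_n z n).
  by move=> i j; rewrite mxE.
apply/matrixP => k j; rewrite (ord1 j) summxE mxE big_enum /=.
by apply: eq_bigr => i _; rewrite !mxE mulrC.
Qed.

Lemma conic_mx A c : (forall v, mge0 (A *m v) -> dot c v <= nrm v) ->
  exists2 z, mge0 z & nrm (c + A^T *m z) <= 1.
Proof.
move=> H.
have [w hw hn] : exists2 w, incone (rows A) w & nrm (c + w) <= 1.
  by apply: conic => v /Kin_rows; apply: H.
have [z hz e] := cone_rows hw; exists z => //; by rewrite -e.
Qed.

Lemma KKT_cone A c (u0 : 'cV[R]_d) : (forall v, mge0 (A *m v) -> dot c v <= nrm v) ->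
  mge0 (A *m u0) -> dot c u0 = nrm u0 ->
  exists z, [/\ mge0 z, (forall n, z n 0 * (A *m u0) n 0 = 0) &
                subdiff (@norm2 R d) u0 (c + A^T *m z)].
Proof.
move=> H hu0 hcu.
pose act n := (A *m u0) n 0 == 0.
pose A' := \matrix_(n, k) (if act n then A n k else 0).
have A'E : forall v n, (A' *m v) n 0 = if act n then (A *m v) n 0 else 0.
  move=> v n; rewrite mxE; case hn: (act n).
    by rewrite mxE; apply: eq_bigr => k _; rewrite mxE hn.
  by rewrite big1 // => k _; rewrite mxE hn mul0r.
have H' : forall v, mge0 (A' *m v) -> dot c v <= nrm v.
  move=> v hv.
  pose s := 1 + \sum_n (if act n then 0 else `|(A *m v) n 0| / (A *m u0) n 0).
  have hterm : forall n, 0 <= (if act n then 0 else `|(A *m v) n 0| / (A *m u0) n 0).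
    by move=> n; case: ifP => // _; apply: divr_ge0 => //; apply: hu0.
  have hs0 : 0 <= s by rewrite addr_ge0 // sumr_ge0.
  have hw : mge0 (A *m (s *: u0 + v)).
    move=> n j; rewrite (ord1 j) mulmxDr -scalemxAr mxE [X in X + _]mxE.
    have hu := hu0 n 0.
    case hn: (act n).
      have := hv n 0; rewrite A'E hn.
      by move: hn => /eqP ->; rewrite mulr0 add0r.
    have hp : 0 < (A *m u0) n 0 by rewrite lt_def hu andbT; move: hn; rewrite /act => ->.
    have hle : `|(A *m v) n 0| / (A *m u0) n 0 <= s.
      rewrite /s (bigD1 n) //= hn.
      have : 0 <= \sum_(i | i != n) (if act i then 0 else `|(A *m v) i 0| / (A *m u0) i 0).
        by apply: sumr_ge0 => i _; exact: hterm i.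
      lra.
    move: hle; rewrite ler_pdivrMr // => hle.
    have := ler_norm (- (A *m v) n 0); rewrite normrN; lra.
  have := H _ hw; rewrite dotDr dotZr hcu.
  have := nrmD (s *: u0) v; rewrite nrmZ ger0_norm //; lra.
have [z hz hn] := conic_mx H'.
pose z0 := \col_n (if act n then z n 0 else 0).
have e : A'^T *m z = A^T *m z0.
  apply/matrixP => k j; rewrite (ord1 j) !mxE; apply: eq_bigr => n _; rewrite !mxE.
  by case: ifP => _; rewrite ?mul0r ?mulr0.
exists z0; split.
- by move=> i j; rewrite (ord1 j) mxE; case: ifP => // _; apply: hz.
- by move=> n; rewrite mxE; case: ifP => [/eqP ->|_]; rewrite ?mulr0 ?mul0r.
- apply: subdiffI; first by rewrite -e.
  rewrite dotDl dot_adj hcu /dot big1 ?addr0 // => n _.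
  by rewrite mxE; case: ifP => [/eqP ->|_]; rewrite ?mulr0 ?mul0r.
Qed.

End Mat.

Section Main.
Variable R : realType.
Variables N d : nat.
Implicit Types (X : 'M[R]_(N, d)) (u v : 'cV[R]_d) (lam z : 'cV[R]_N) (D : {set 'I_N}).


Lemma DmxE D (k : nat) (M : 'M[R]_(N, k)) i j :
  (Dmx D *m M) i j = (if i \in D then 1 else 0) * M i j.
Proof. by rewrite /Dmx mul_diag_mx !mxE. Qed.

Lemma SmxE D k (M : 'M[R]_(N, k)) i j :
  ((2%:R *: Dmx D - 1%:M) *m M) i j = (if i \in D then 1 else -1) * M i j.
Proof.
rewrite mulmxBl -scalemxAl mul1mx mxE [X in X + _]mxE [X in _ + X]mxE DmxE.
by case: (i \in D); ring.
Qed.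

Lemma trDmx D : (@Dmx R N D)^T = Dmx D.
Proof. exact: tr_diag_mx. Qed.

Lemma trSmx D : (2%:R *: @Dmx R N D - 1%:M)^T = 2%:R *: Dmx D - 1%:M.
Proof.
apply/matrixP => i j; rewrite !mxE eq_sym.
by case: eqP => [->|]; rewrite ?mulr0n ?mulr1n.
Qed.

Lemma dot_XD X (M : 'M[R]_N) lam u : M^T = M ->
  dot (X^T *m M *m lam) u = dot lam (M *m X *m u).
Proof. by move=> hM; rewrite -{1}hM -trmx_mul dot_adj. Qed.

Lemma quad_dot (M : 'M[R]_N) X lam u : (lam^T *m M *m X *m u) 0 0 = dot lam (M *m X *m u).
Proof. by rewrite -dot_mx !mulmxA. Qed.

Lemma relu_pat D X u : mge0 ((2%:R *: Dmx D - 1%:M) *m X *m u) ->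
  Dmx D *m X *m u = relu (X *m u).
Proof.
move=> H; apply/matrixP => n j; rewrite (ord1 j) -mulmxA DmxE /relu [in RHS]mxE.
have := H n 0; rewrite -mulmxA SmxE.
case: (n \in D) => h.
  by rewrite max_l ?mul1r //; lra.
by rewrite max_r ?mul0r //; lra.
Qed.

Lemma pat_sign X u : mge0 ((2%:R *: Dmx (pattern X u) - 1%:M) *m X *m u).
Proof.
move=> n j; rewrite (ord1 j) -mulmxA SmxE inE.
by case: ifP => h; rewrite ?mul1r // mulN1r oppr_ge0 leNgt; apply/negP => h'; move: h; rewrite ltW.
Qed.

Lemma part2 p X (Ds : 'I_p -> {set 'I_N}) lam :
  (forall D, (exists w, D = pattern X w) <-> (exists j, Ds j = D)) ->
  (dual_feasible X lam <-> dual_feasible_patterns X Ds lam).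
Proof.
move=> Hpat; split.
  move=> H j u hu hS; rewrite quad_dot relu_pat // -dot_mx; exact: H.
move=> H u hu.
have [j hj] := (Hpat (pattern X u)).1 (ex_intro _ u erefl).
have hS := pat_sign X u; rewrite -hj in hS.
by have := H j u hu hS; rewrite quad_dot relu_pat // dot_mx.
Qed.

Lemma hom p X (Ds : 'I_p -> {set 'I_N}) lam : dual_feasible_patterns X Ds lam ->
  forall j v, mge0 ((2%:R *: Dmx (Ds j) - 1%:M) *m X *m v) ->
  `|dot lam (Dmx (Ds j) *m X *m v)| <= nrm v.
Proof.
move=> H j v hS.
have [h0|hn0] := eqVneq (nrm v) 0.
  by rewrite (nrm_eq0 h0) mulmx0 dot0r normr0 nrm0.
have hk : 0 < nrm v by rewrite lt_def hn0 nrm_ge0.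
have := H j ((nrm v)^-1 *: v).
rewrite norm2E nrmZ ger0_norm ?invr_ge0 ?nrm_ge0 // mulVf // lexx quad_dot => /(_ isT).
rewrite -!scalemxAr dotZr normrM ger0_norm ?invr_ge0 ?nrm_ge0 // mulrC ler_pdivrMr // mul1r.
apply; move=> i k; rewrite mxE; apply: mulr_ge0; [by rewrite invr_ge0 nrm_ge0 | exact: hS].
Qed.

End Main.

Section Main2.
Variable R : realType.
Variables N d : nat.

Lemma forward p (X : 'M[R]_(N, d)) y (Ds : 'I_p -> {set 'I_N}) lam u u' z z' :
  convex_KKT X y Ds lam u u' z z' -> dual_feasible_patterns X Ds lam.
Proof.
rewrite /convex_KKT /=; case=> [[_ _ _ _ hz] [st' st _ _]] j v hv hS.
have hpos : forall w, mge0 w -> 0 <= dot w ((2%:R *: Dmx (Ds j) - 1%:M) *m X *m v).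
  by move=> w hw; apply: sumr_ge0 => i _; apply: mulr_ge0; [apply: hw | apply: hS].
have e : forall w, dot (X^T *m (2%:R *: Dmx (Ds j) - 1%:M) *m w) v
                  = dot w ((2%:R *: Dmx (Ds j) - 1%:M) *m X *m v).
  by move=> w; rewrite dot_XD // trSmx.
have h1 := subdiff_le (st' j) v; rewrite dotDl dot_XD ?trDmx // e in h1.
have h2 := subdiff_le (st j) v; rewrite dotDl dotNl dot_XD ?trDmx // e in h2.
rewrite quad_dot ler_norml; rewrite norm2E in hv.
have := hpos _ (hz j).1; have := hpos _ (hz j).2; lra.
Qed.

End Main2.

Section Back.
Variable R : realType.
Variables N d : nat.

Lemma kpm (x : R) : Num.max x 0 - Num.max (- x) 0 = x.
Proof.
case: (boolP (0 <= x)) => h.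
  have h2 : - x <= 0 by lra.
  by rewrite (max_l h) (max_r h2) subr0.
have h1 : x <= 0 by move: h; rewrite -ltNge; apply: ltW.
have h2 : 0 <= - x by lra.
by rewrite (max_r h1) (max_l h2) sub0r opprK.
Qed.

Lemma backward p m (X : 'M[R]_(N, d)) y (Ds : 'I_p -> {set 'I_N})
    (W1 : 'M[R]_(d, m)) (w2 : 'cV[R]_m) (lam : 'cV[R]_N) :
  (forall D : {set 'I_N}, (exists w : 'cV[R]_d, D = pattern X w) <-> (exists j, Ds j = D)) ->
  nonconvex_KKT X y W1 w2 lam -> dual_feasible_patterns X Ds lam ->
  (exists (u u' : 'I_p -> 'cV[R]_d) (z z' : 'I_p -> 'cV[R]_N),
       \sum_(j < p) Dmx (Ds j) *m X *m (u' j - u j) = relu (X *m W1) *m w2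
       /\ convex_KKT X y Ds lam u u' z z').
Proof.
move=> Hpat [hYl hmarg hcs hw2 [g [hg hcol]]] Hdf.
have [jof hjof] : exists jof : 'I_m -> 'I_p, forall i, Ds (jof i) = pattern X (col i W1).
  apply: (@fin_all_exists _ (fun _ => 'I_p) (fun i j => Ds j = pattern X (col i W1))) => i.
  by have [j hj] := (Hpat _).1 (ex_intro _ (col i W1) erefl); exists j.
have XW : forall i n, (X *m col i W1) n 0 = (X *m W1) n i.
  by move=> i n; rewrite !mxE; apply: eq_bigr => l _; rewrite mxE.
have RW : forall i, relu (X *m col i W1) = col i (relu (X *m W1)).
  move=> i; apply/matrixP => n k; rewrite (ord1 k) /relu !mxE.
  by congr (Num.max _ 0); apply: eq_bigr => l _; rewrite mxE.
have gX : forall n i, g n i * (X *m W1) n i = Num.max ((X *m W1) n i) 0.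
  move=> n i; have [g01 gp gn] := hg n i.
  case: (ltrgtP ((X *m W1) n i) 0) => h.
  - by rewrite gn // mul0r.
  - by rewrite gp // mul1r.
  - by rewrite h mulr0.
have colw2 : forall i, dot lam (col i (relu (X *m W1))) = w2 i 0.
  by move=> i; rewrite hw2 mxE /dot; apply: eq_bigr => n _; rewrite !mxE mulrC.
have F1 : forall i, dot (col i W1) (col i W1) = w2 i 0 ^+ 2.
  move=> i; rewrite {1}hcol dotZl dot_sum.
  have -> : \sum_n dot ((lam n 0 * g n i) *: (row n X)^T) (col i W1) = w2 i 0.
    rewrite -colw2; apply: eq_bigr => n _.
    rewrite dotZl -mulmx_dot XW -mulrA gX.
    by rewrite /relu !mxE.
  by rewrite expr2.
have nrmw : forall i, nrm (col i W1) = `|w2 i 0| by move=> i; rewrite /nrm F1 sqrtr_sqr.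
have F3 : forall i, mge0 ((2%:R *: Dmx (Ds (jof i)) - 1%:M) *m X *m col i W1).
  by move=> i; rewrite hjof; exact: pat_sign.
have F2 : forall i, dot lam (Dmx (Ds (jof i)) *m X *m col i W1) = w2 i 0.
  by move=> i; rewrite (relu_pat (F3 i)) RW colw2.
pose uu (k : 'I_m -> R) j := \sum_(i | jof i == j) k i *: col i W1.
have coneu : forall k j, (forall i, 0 <= k i) ->
    mge0 ((2%:R *: Dmx (Ds j) - 1%:M) *m X *m uu k j).
  move=> k j hk n l; rewrite /uu mulmx_sumr summxE; apply: sumr_ge0 => i /eqP <-.
  rewrite -scalemxAr mxE; apply: mulr_ge0 => //; exact: F3.
have stat : forall j (k : 'I_m -> R) (sg : R) (c : 'cV[R]_d), `|sg| = 1 ->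
    (forall v, dot c v = sg * dot lam (Dmx (Ds j) *m X *m v)) -> (forall i, 0 <= k i) ->
    (forall i, k i * (sg * w2 i 0) = k i * `|w2 i 0|) ->
    exists z, [/\ mge0 z,
       (forall n, z n 0 * ((2%:R *: Dmx (Ds j) - 1%:M) *m X *m uu k j) n 0 = 0) &
       subdiff (@norm2 R d) (uu k j) (c + X^T *m (2%:R *: Dmx (Ds j) - 1%:M) *m z)].
  move=> j k sg c hsg hc hk hkw.
  have H1 : forall v, mge0 ((2%:R *: Dmx (Ds j) - 1%:M) *m X *m v) -> dot c v <= nrm v.
    move=> v hv; rewrite hc; apply: le_trans (ler_norm _) _.
    rewrite normrM hsg mul1r; exact: hom Hdf j v hv.
  have H3 : dot c (uu k j) = nrm (uu k j).
    apply/le_anti; rewrite H1 /=; last exact: coneu.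
    have -> : dot c (uu k j) = \sum_(i | jof i == j) nrm (k i *: col i W1).
      rewrite /uu dotC dot_sum; apply: eq_bigr => i /eqP hi.
      by rewrite dotZl dotC hc -hi F2 hkw nrmZ (ger0_norm (hk i)) nrmw.
    exact: nrm_sum.
  have [z [hz hcz hsd]] := KKT_cone H1 (coneu k j hk) H3.
  by exists z; split => //; rewrite trmx_mul trSmx in hsd.
pose kp i := Num.max (w2 i 0) 0.
pose km i := Num.max (- w2 i 0) 0.
have Hzp : forall j, exists z, [/\ mge0 z,
       (forall n, z n 0 * ((2%:R *: Dmx (Ds j) - 1%:M) *m X *m uu kp j) n 0 = 0) &
       subdiff (@norm2 R d) (uu kp j) (X^T *m Dmx (Ds j) *m lam + X^T *m (2%:R *: Dmx (Ds j) - 1%:M) *m z)].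
  move=> j; apply: (stat j kp 1).
  - exact: normr1.
  - by move=> v; rewrite dot_XD ?trDmx // mul1r.
  - by move=> i; rewrite /kp le_max lexx orbT.
  - move=> i; rewrite mul1r /kp; case: (lerP 0 (w2 i 0)) => h.
      by rewrite ger0_norm.
    by rewrite !mul0r.
have Hzm : forall j, exists z, [/\ mge0 z,
       (forall n, z n 0 * ((2%:R *: Dmx (Ds j) - 1%:M) *m X *m uu km j) n 0 = 0) &
       subdiff (@norm2 R d) (uu km j) (- (X^T *m Dmx (Ds j) *m lam) + X^T *m (2%:R *: Dmx (Ds j) - 1%:M) *m z)].
  move=> j; apply: (stat j km (-1)).
  - by rewrite normrN normr1.
  - by move=> v; rewrite dotNl dot_XD ?trDmx // mulN1r.
  - by move=> i; rewrite /km le_max lexx orbT.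
  - move=> i; rewrite mulN1r /km; case: (lerP (w2 i 0) 0) => h.
      by rewrite ler0_norm.
    have h' : - w2 i 0 <= 0 by lra.
    by rewrite (max_r h') !mul0r.
have [zp hzp] := fin_all_exists Hzp.
have [zm hzm] := fin_all_exists Hzm.
have sumE : \sum_(j < p) Dmx (Ds j) *m X *m (uu kp j - uu km j) = relu (X *m W1) *m w2.
  have -> : relu (X *m W1) *m w2 = \sum_i w2 i 0 *: col i (relu (X *m W1)).
    apply/matrixP => n l; rewrite (ord1 l) mxE summxE; apply: eq_bigr => i _.
    by rewrite [in RHS]mxE [col _ _ _ _]mxE mulrC.
  rewrite [RHS](partition_big jof xpredT) //=; apply: eq_bigr => j _.
  rewrite /uu -sumrB mulmx_sumr; apply: eq_bigr => i /eqP <-.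
  by rewrite -scalerBl kpm -scalemxAr (relu_pat (F3 i)) RW.
exists (uu km), (uu kp), zm, zp; split => //.
rewrite /convex_KKT /=; split; split.
- by rewrite sumE.
- by move=> j; apply: coneu => i; rewrite /km le_max lexx orbT.
- by move=> j; apply: coneu => i; rewrite /kp le_max lexx orbT.
- exact: hYl.
- by move=> j; have [? _ _] := hzm j; have [? _ _] := hzp j.
- by move=> j; have [_ _ ?] := hzp j.
- by move=> j; have [_ _ ?] := hzm j.
- by rewrite sumE.
- by move=> j n; have [_ ? _] := hzm j; have [_ ? _] := hzp j.
Qed.

End Back.

Theorem theorem3 (R : realType) (N d m p : nat)
    (X : 'M[R]_(N, d)) (y : 'cV[R]_N)
    (Ds : 'I_p -> {set 'I_N})
    (W1 : 'M[R]_(d, m)) (w2 : 'cV[R]_m) (lam : 'cV[R]_N) :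
  (forall n, y n 0 = 1 \/ y n 0 = -1) ->
  injective Ds ->
  (forall D : {set 'I_N}, (exists w : 'cV[R]_d, D = pattern X w) <-> (exists j, Ds j = D)) ->
  nonconvex_KKT X y W1 w2 lam ->
  ((exists (u u' : 'I_p -> 'cV[R]_d) (z z' : 'I_p -> 'cV[R]_N),
       \sum_(j < p) Dmx (Ds j) *m X *m (u' j - u j) = relu (X *m W1) *m w2
       /\ convex_KKT X y Ds lam u u' z z')
     <-> dual_feasible X lam)
  /\ (dual_feasible X lam <-> dual_feasible_patterns X Ds lam).
Proof.
move=> _ _ Hpat HK.
have P2 := @part2 R N d p X Ds lam Hpat; split => //; split.
  by case=> [u [u' [z [z' [_ hK]]]]]; apply/P2; exact: forward hK.
by move=> /P2 hdf; exact: (backward Hpat HK hdf).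
Qed.
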